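(* In the HTLC setting described in the context, $\mathcal{B}$ cannot bribe the miners in this manner (i.e. make it a subgame perfect equilibrium for all miners to include unrelated transactions until round $T$ and include $tx^{h}_{\mathcal{B}}$ in round $T$ by offering a fee $f^{h}_{\mathcal{B}}>\frac{f^{h}_{\mathcal{A}}-f}{\lambda_{\min}}+f$) if $\mathcal{A}$'s transaction $tx^{h}_{\mathcal{A}}$ offers a fee $f^{h}_{\mathcal{A}}>\lambda_{\min}\,(v^{\mathrm{dep}}-f)+f$.
   Context: Blockchain model: $n$ miners; miner $i$ has mining power $\lambda_i>0$, $\sum_i\lambda_i=1$, $\lambda_{\min}=\min_i\lambda_i$. Each round exactly one miner is chosen, miner $i$ with probability $\lambda_i$, and creates a block containing one transaction of her choice, receiving its fee. An unrelated transaction offering base fee $f$ is always available. A contract can be redeemed at most once. Miners are rational, non-myopic, with perfect information. HTLC: a contract holding $v^{\mathrm{dep}}$ tokens initiated in block $b_j$, with digest $dig_a=H(pre_a)$ and timeout $T$, redeemable via htlc-A (signature of $\mathcal{A}$ and $pre_a$; any block) or htlc-B (signature of $\mathcal{B}$; only at least $T$ blocks after initiation). $\mathcal{A}$ publishes in the first round $tx^{h}_{\mathcal{A}}$ redeeming via htlc-A with fee $f^{h}_{\mathcal{A}}$; $\mathcal{B}$'s bribing transaction $tx^{h}_{\mathcal{B}}$ redeems via htlc-B and its fee $f^{h}_{\mathcal{B}}$ cannot exceed the contract's tokens $v^{\mathrm{dep}}$. The HTLC game has $T$ rounds creating $b_{j+1},\dots,b_{j+T}$; a miner can include an unrelated transaction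 in any round, $tx^{h}_{\mathcal{A}}$ in any round while the HTLC is unredeemed, and $tx^{h}_{\mathcal{B}}$ only in round $T$ while the HTLC is unredeemed. *)

(* Defs.v *)
From mathcomp Require Import all_boot all_order all_algebra.
From mathcomp Require Import reals.
Unset Printing Implicit Defensive.
Import Order.TTheory GRing.Theory Num.Theory.
Local Open Scope ring_scope.

Inductive act := Unrel | TxA | TxB.

Definition act_eqb (a b : act) : bool :=
  match a, b with
  | Unrel, Unrel | TxA, TxA | TxB, TxB => true
  | _, _ => false end.

Definition feasible (T k : nat) (redeemed : bool) (a : act) : bool :=
  match a with
  | Unrel => true
  | TxA => ~~ redeemed
  | TxB => ~~ redeemed && (k == T)
  end.

Definition fee {R : realType} (f fA fB : R) (a : act) : R :=
  match a with Unrel => f | TxA => fA | TxB => fB end.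

Definition next_state (redeemed : bool) (a : act) : bool :=
  redeemed || ~~ act_eqb a Unrel.

(* A (pure, Markov) strategy of one miner: round -> redeemed? -> action. *)
Definition mstrat := nat -> bool -> act.
Definition profile (n : nat) := 'I_n -> mstrat.

Definition feasible_strat (T : nat) (s : mstrat) : Prop :=
  forall k r, feasible T k r (s k r).

Definition feasible_profile (n T : nat) (sigma : profile n) : Prop :=
  forall j, feasible_strat T (sigma j).

(* Expected total fee of miner i over the next m rounds, starting in round k
   with redemption state r, when the profile sigma is played; in every round
   miner j is selected with probability lam j. *)
Fixpoint value {R : realType} (n : nat) (lam : 'I_n -> R) (f fA fB : R)
    (sigma : profile n) (i : 'I_n) (m k : nat) (r : bool) : R :=
  match m with
  | 0 => 0
  | m'.+1 =>
      \sum_(j < n) lam j *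
        ((if j == i then fee f fA fB (sigma j k r) else 0)
         + value n lam f fA fB sigma i m' k.+1 (next_state r (sigma j k r)))
  end.

Definition deviate (n : nat) (sigma : profile n) (i : 'I_n) (s : mstrat)
  : profile n := fun j => if j == i then s else sigma j.

(* Subgames start at the beginning of a round k (1 <= k <= T) in a reachable
   redemption state (the HTLC is unredeemed at the start of round 1).  The
   game has rounds 1..T, so from round k there are T - k + 1 rounds left. *)
Definition reachable (k : nat) (r : bool) : bool := (1 < k)%N || ~~ r.

Definition is_SPE {R : realType} (n T : nat) (lam : 'I_n -> R) (f fA fB : R)
    (sigma : profile n) : Prop :=
  feasible_profile n T sigma /\
  forall (k : nat) (r : bool), (1 <= k <= T)%N -> reachable k r ->
  forall (i : 'I_n) (s : mstrat), feasible_strat T s ->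
    value n lam f fA fB (deviate n sigma i s) i (T - k).+1 k r
      <= value n lam f fA fB sigma i (T - k).+1 k r.

Definition bribe_profile (n T : nat) : profile n :=
  fun _ k r => if (k == T) && ~~ r then TxB else Unrel.

(* Main.v *)
Require Import Defs.
From mathcomp Require Import all_boot all_order all_algebra.
From mathcomp Require Import reals.
From mathcomp Require Import ring lra zify.
Import Order.TTheory GRing.Theory Num.Theory.
Local Open Scope ring_scope.

Lemma sum_if (R : realType) (n : nat) (lam : 'I_n -> R) (i : 'I_n) (a b : R) :
  \sum_(i < n) lam i = 1 ->
  \sum_(j < n) lam j * (if j == i then a else b) = lam i * a + (1 - lam i) * b.
Proof.
move=> hs.
have hs' := hs; rewrite (bigD1 i) //= in hs'.
rewrite (bigD1 i) //= eqxx.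
have -> : \sum_(j < n | j != i) lam j * (if j == i then a else b)
          = (\sum_(j < n | j != i) lam j) * b.
  rewrite big_distrl /=; apply: eq_bigr => j /negbTE -> //.
have -> : \sum_(j < n | j != i) lam j = 1 - lam i by rewrite -hs'; ring.
by [].
Qed.

Theorem corollary2 (R : realType) (n T : nat) (lam : 'I_n -> R)
    (lam_min f fA fB vdep : R)
    (hlam_pos : forall i, 0 < lam i)
    (hlam_sum : \sum_(i < n) lam i = 1)
    (hlam_min : (exists i, lam i = lam_min) /\ (forall j, lam_min <= lam j))
    (hT : (1 < T)%N)
    (hfB : fB <= vdep)
    (hfA : fA > lam_min * (vdep - f) + f) :
  ~ is_SPE n T lam f fA fB (bribe_profile n T).
Proof.
case=> _ H.
case: hlam_min => [[i hi] _].
pose s : mstrat := fun k r => if (k == T.-1) && ~~ r then TxA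
                              else bribe_profile n T i k r.
have fs : feasible_strat T s.
  move=> k r; rewrite /s /bribe_profile.
  by case: r; rewrite /= ?andbT ?andbF; repeat case: ifP => //=.
have k1 : (1 <= T.-1 <= T)%N by apply/andP; split; lia.
have := H T.-1 false k1 (orbT _) i s fs.
have -> : (T - T.-1).+1 = 2%N by lia.
have hTT : (T.-1 == T) = false by apply/negbTE; lia.
have hTT' : (T == T.-1) = false by apply/negbTE; lia.
rewrite /= /deviate /s /bribe_profile /= ?hTT ?eqxx /=.
have inner : forall (F : 'I_n -> R), \sum_(j0 < n) lam j0 * ((if j0 == i then F j0 else 0) + 0) = lam i * F i.
  move=> F; rewrite (bigD1 i) //= eqxx big1 ?addr0 // => j0 /negbTE ->; rewrite addr0 mulr0 //.
have hS : T.-1.+1 = T by lia.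
have L : forall X Y : 'I_n -> R, (forall j, X j = Y j) -> \sum_(j < n) X j = \sum_(j < n) Y j.
  by move=> X Y h; apply: eq_bigr => j _.
rewrite (L _ (fun j => lam j * (if j == i then fA + lam i * f else lam i * fB))); last first.
  by move=> j; case: eqP => [->|_] /=; rewrite inner /= eqxx hS ?eqxx ?hTT ?hTT' /= ?add0r.
rewrite hS eqxx /= (inner (fun _ => fB)).
rewrite sum_if //.
rewrite (L _ (fun j => lam j * (if j == i then f + lam i * fB else lam i * fB))); last first.
  by move=> j; case: eqP => [->|_] /=; rewrite ?add0r.
rewrite sum_if //.
have hp := hlam_pos i; rewrite hi in hp *.
have h1 : lam_min * (fB - f) <= lam_min * (vdep - f).
  apply: ler_wpM2l; [exact: ltW | lra].
have h2 : 0 < lam_min * (fA - f - lam_min * (fB - f)) by apply: mulr_gt0; lra.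
move=> h; nra.
Qed.
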